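(* Suppose we have $2$ agents with additive, identical, normalized valuations, provided with a $2$-value prediction of accuracy $\eta<1-\frac{1-a}{2}$ for some given $a\in(\sqrt3-1,1]$; that is, the allowed error between the prediction and the true valuation is $1-\eta>\frac{1-a}{2}$. Then there is no online algorithm that guarantees an $a$-EFX allocation for all instances with error at most $1-\eta$, even when $T'=T=4$.
   Context: Online fair division with predictions and identical valuations: goods $g_1,\dots,g_T$ arrive one per time step; both agents share a true additive normalized valuation $v$ ($v(g_t)\ge0$, $\sum_{t\in[T]}v(g_t)=1$, $v(S)=\sum_{g\in S}v(g)$), and before any arrival the algorithm receives a prediction $p=(p(g_1),\dots,p(g_{T'}))$ (an additive normalized valuation over $T'$ predicted goods) and the accuracy level. A $2$-value prediction takes at most $2$ distinct values. Error $\frac12\sum_{t=1}^{\max\{T,T'\}}|p(g_t)-v(g_t)|$ (missing entries set to $0$); accuracy $\eta$ means the error is at most $1-\eta$. At time $t$, $v(g_t)$ is revealed and $g_t$ must be irrevocably allocated. For $S\ne\emptyset$, $\bar S=S\setminus\{g\}$ with $g\in\arg\max_{g'\in S}v(S\setminus\{g'\})$, $\bar\emptyset=\emptyset$. An allocation is $a$-EFX if $v(A_i)\ge a\cdot v(\bar A_j)$ for all $i,j$. *)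

(* Defs.v *)
From HB Require Import structures.
From mathcomp Require Import all_boot all_order all_algebra.
From mathcomp Require Import reals.
Set Implicit Arguments. Unset Strict Implicit. Unset Printing Implicit Defensive.
Import Order.TTheory GRing.Theory Num.Theory.
Local Open Scope ring_scope.

Section FairDiv.
Variable R : realType.
Variable n : nat.

Definition setval (v : 'I_n -> R) (S : {set 'I_n}) : R := \sum_(g in S) v g.

Definition normalized (v : 'I_n -> R) : Prop :=
  (forall t, 0 <= v t) /\ \sum_(t < n) v t = 1.

Definition two_valued (p : 'I_n -> R) : Prop :=
  exists x y : R, forall t, p t = x \/ p t = y.

(* error (1/2) sum_t |p(g_t) - v(g_t)|  (here T = T' = n) *)
Definition pred_error (p v : 'I_n -> R) : R :=
  2^-1 * \sum_(t < n) `|p t - v t|.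

(* v(bar S) = max_{g in S} v(S \ {g}), and v(bar emptyset) = 0
   (values are nonnegative, so the default 0 does not affect the max
   when S is nonempty) *)
Definition vbar (v : 'I_n -> R) (S : {set 'I_n}) : R :=
  \big[Num.max/0]_(g in S) setval v (S :\ g).

Definition bundle (alloc : 'I_n -> bool) (i : bool) : {set 'I_n} :=
  [set t | alloc t == i].

Definition aEFX (a : R) (v : 'I_n -> R) (alloc : 'I_n -> bool) : Prop :=
  forall i j : bool, setval v (bundle alloc i) >= a * vbar v (bundle alloc j).

(* Online run of a deterministic online rule: good t is irrevocably
   allocated based only on the values v(g_0), ..., v(g_t) revealed so far
   (past decisions are determined by the earlier prefixes). *)
Definition online_alloc (rule : seq R -> bool) (v : 'I_n -> R) : 'I_n -> bool :=
  fun t => rule (take t.+1 [seq v i | i <- enum 'I_n]).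

End FairDiv.

(* Main.v *)
Require Import Defs.
From HB Require Import structures.
From mathcomp Require Import all_boot all_order all_algebra.
From mathcomp Require Import reals.
From mathcomp Require Import lra.
Import Order.TTheory GRing.Theory Num.Theory.
Local Open Scope ring_scope.

Section Helpers.
Variable R : realType.
Definition vseq (s : seq R) : 'I_4 -> R := fun t => nth 0 s (val t).
Definition bal (s : seq bool) : 'I_4 -> bool := fun t => nth false s (val t).

Lemma setval4 (v : 'I_4 -> R) S : @setval R 4 v S = \sum_(t<4) (if t \in S then v t else 0).
Proof. by rewrite /setval big_mkcond. Qed.

Lemma efx_bound (a : R) v alloc i j (g : 'I_4) : 0 <= a -> aEFX a v alloc -> alloc g = j ->
  a * @setval R 4 v (bundle alloc j :\ g) <= @setval R 4 v (bundle alloc i).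
Proof.
move=> a0 H hg; apply: (le_trans _ (H i j)); apply: (ler_wpM2l a0).
rewrite /vbar (bigD1 g) /=; last by rewrite inE hg.
by rewrite le_max lexx.
Qed.

Lemma aEFX_ext (a : R) v (al al' : 'I_4 -> bool) : al =1 al' -> aEFX a v al -> aEFX a v al'.
Proof.
move=> E H i j.
have B k : bundle al k = bundle al' k by apply/setP => t; rewrite !inE E.
by rewrite -!B.
Qed.

Lemma online_bal (rule : seq R -> bool) (s0 s1 s2 s3 : R) :
  online_alloc rule (vseq [:: s0; s1; s2; s3]) =1
  bal [:: rule [:: s0]; rule [:: s0; s1]; rule [:: s0; s1; s2]; rule [:: s0; s1; s2; s3]].
Proof.
have M : [seq vseq [:: s0; s1; s2; s3] i | i <- enum 'I_4] = [:: s0; s1; s2; s3].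
  by rewrite /vseq (map_comp (nth 0 [:: s0; s1; s2; s3]) val) val_enum_ord.
by move=> [[|[|[|[|k]]]] Hk] //; rewrite /online_alloc M.
Qed.

Ltac tryk H a0 i j g :=
  have := @efx_bound _ _ _ i j g a0 H (erefl _);
  rewrite !setval4 !big_ord_recl !big_ord0 /vseq /= !inE /=; lra.

Ltac killall H a0 :=
  first [ tryk H a0 false true (@Ordinal 4 0 isT)
        | tryk H a0 false true (@Ordinal 4 1 isT)
        | tryk H a0 false true (@Ordinal 4 2 isT)
        | tryk H a0 false true (@Ordinal 4 3 isT)
        | tryk H a0 true false (@Ordinal 4 0 isT)
        | tryk H a0 true false (@Ordinal 4 1 isT)
        | tryk H a0 true false (@Ordinal 4 2 isT)
        | tryk H a0 true false (@Ordinal 4 3 isT) ].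

Lemma leafS (a x y : R) (b b2 b3 : bool) : 0 <= a ->
  0 < a * (x + y + y) -> y < a * (x + y) -> x + x < a * y ->
  ~ aEFX a (vseq [:: x; x; y; y]) (bal [:: b; b; b2; b3]).
Proof.
move=> a0 h0 h1 h2 H.
by case: b b2 b3 H => [] [] [] H; killall H a0.
Qed.

Lemma leafD (a x z w : R) (b b2 b3 : bool) : 0 <= a ->
  x < a * (z + w) -> x + z < a * w ->
  ~ aEFX a (vseq [:: x; x; z; w]) (bal [:: b; ~~ b; b2; b3]).
Proof.
move=> a0 h1 h2 H.
by case: b b2 b3 H => [] [] [] H; killall H a0.
Qed.

End Helpers.

Theorem theorem4p16 (R : realType) (a eta : R) :
  Num.sqrt 3 - 1 < a -> a <= 1 -> eta < 1 - (1 - a) / 2 ->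
  forall alg : ('I_4 -> R) -> R -> seq R -> bool,
  exists p : 'I_4 -> R,
    normalized p /\ two_valued p /\
    exists v : 'I_4 -> R,
      normalized v /\ pred_error p v <= 1 - eta /\
      ~ aEFX a v (online_alloc (alg p eta) v).
Proof.
move=> ha ha1 heta alg.
have s0 : 0 <= Num.sqrt (3 : R) := sqrtr_ge0 _.
have s2 : Num.sqrt (3 : R) ^+ 2 = 3 by rewrite sqr_sqrtr.
have a7 : 7 / 10 < a by nra.
have aq : 0 < a ^+ 2 + 2 * a - 2 by nra.
set k := (a ^+ 2 + 2 * a - 2) / 10.
set u := 1 - eta - (1 - a) / 2.
have [eps [e0 [e1 e2]]] : exists eps : R, 0 < eps /\ eps <= u /\ eps <= k.
  have u0 : 0 < u by rewrite /u; lra.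
  have k0 : 0 < k by rewrite /k; lra.
  by case: (leP u k) => h; [exists u | exists k]; lra.
have k1 : k <= 1 / 10.
  have : 0 <= (1 - a) * (a + 3) by apply: mulr_ge0; lra.
  rewrite /k; nra.
set x := (1 - a) / 2 + eps.
set y := a / 2 - eps.
set z := a - 1 / 2 - 2 * eps.
have a0 : 0 <= a by lra.
exists (@vseq R [:: x; x; y; y]).
split.
  split; first by move=> [[|[|[|[|j]]]] Hj] //=; rewrite /vseq /x /y /=; lra.
  by rewrite !big_ord_recl big_ord0 /vseq /= /x /y; lra.
split.
  by exists x, y => [[[|[|[|[|j]]]] Hj]] /=; rewrite /vseq /=; auto.
set rule := alg _ eta.
case E: (rule [:: x] == rule [:: x; x]).
- exists (@vseq R [:: x; x; y; y]); split.
    split; first by move=> [[|[|[|[|j]]]] Hj] //=; rewrite /vseq /x /y /=; lra.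
    by rewrite !big_ord_recl big_ord0 /vseq /= /x /y; lra.
  split.
    rewrite /pred_error !big_ord_recl big_ord0 /vseq /= !subrr normr0.
    rewrite /u in e1; lra.
  move=> H; move: (@aEFX_ext R _ _ _ _ (@online_bal R rule _ _ _ _) H).
  rewrite -(eqP E); apply: leafS => //.
  + apply: mulr_gt0; rewrite /x /y; lra.
  + have -> : x + y = 1 / 2 by rewrite /x /y; lra.
    rewrite /y; lra.
  + have h : 0 <= (k - eps) * a by apply: mulr_ge0; lra.
    rewrite /x /y /k in h e2 *; nra.
- exists (@vseq R [:: x; x; z; 1 / 2]); split.
    split; first by move=> [[|[|[|[|j]]]] Hj] //=; rewrite /vseq /x /z /=; lra.
    by rewrite !big_ord_recl big_ord0 /vseq /= /x /z; lra.
  split.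
    rewrite /pred_error !big_ord_recl big_ord0 /vseq /= !subrr normr0.
    rewrite (ger0_norm (_ : 0 <= y - z)); last by rewrite /y /z; lra.
    rewrite (ler0_norm (_ : y - 1 / 2 <= 0)); last by rewrite /y; lra.
    rewrite /u /y /z in e1 *; lra.
  move=> H; move: (@aEFX_ext R _ _ _ _ (@online_bal R rule _ _ _ _) H).
  have -> : rule [:: x; x] = ~~ rule [:: x] by move: E; case: (rule [:: x]); case: (rule [:: x; x]).
  apply: leafD => //.
  + have h : 0 <= (k - eps) * a by apply: mulr_ge0; lra.
    have -> : z + 1 / 2 = a - 2 * eps by rewrite /z; lra.
    rewrite /x /k in h e2 *; nra.
  + rewrite /x /z; lra.
Qed.
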